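(* Let $\mathcal{A} = (Q, \Sigma, M, \alpha, \eta)$ be an $\mathbb{R}$-IFA. Then $L(\mathcal{A})$ is a regular language, and there is a deterministic finite automaton $\mathcal{B}$ with at most $2^{|Q|}$ states such that $L(\mathcal{B}) = L(\mathcal{A})$.
   Context: An $\mathbb{R}$-weighted automaton $\mathcal{A} = (Q, \Sigma, M, \alpha, \eta)$ consists of a finite set of states $Q$, a finite alphabet $\Sigma$, a map $M : \Sigma \to \mathbb{R}^{Q \times Q}$, an initial row vector $\alpha \in \mathbb{R}^Q$ and a final column vector $\eta \in \mathbb{R}^Q$. $M$ is extended to $\Sigma^*$ by $M(a_1\cdots a_k) = M(a_1)\cdots M(a_k)$ (and $M(\varepsilon)$ the identity), and $L_\mathcal{A}(w) = \alpha M(w) \eta$ for $w \in \Sigma^*$. $\mathcal{A}$ is an $\mathbb{R}$-IFA (image-binary finite automaton) if $L_\mathcal{A}(w) \in \{0,1\}$ for all $w \in \Sigma^*$; it then defines the language $L(\mathcal{A}) = \{w \in \Sigma^* \mid L_\mathcal{A}(w) = 1\}$. *)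

(* Defs.v *)
From HB Require Import structures.
From mathcomp Require Import all_boot all_order all_algebra.
From mathcomp Require Import reals.
Set Implicit Arguments. Unset Strict Implicit. Unset Printing Implicit Defensive.
Import Order.TTheory GRing.Theory Num.Theory.
Local Open Scope ring_scope.

(* An R-weighted automaton with state set 'I_n (so |Q| = n), alphabet a
   finType Sigma, transition matrices M a, initial row vector alpha and
   final column vector eta. *)
Record wautomaton (R : realType) (Sigma : finType) (n : nat) := WAutomaton {
  wa_M : Sigma -> 'M[R]_n;
  wa_alpha : 'rV[R]_n;
  wa_eta : 'cV[R]_n }.

Definition wa_Mword (R : realType) (Sigma : finType) (n : nat)
  (A : wautomaton R Sigma n) (w : seq Sigma) : 'M[R]_n :=
  foldr (fun a N => wa_M A a *m N) 1%:M w.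

Definition wa_weight (R : realType) (Sigma : finType) (n : nat)
  (A : wautomaton R Sigma n) (w : seq Sigma) : R :=
  (wa_alpha A *m wa_Mword A w *m wa_eta A) ord0 ord0.

Definition is_IFA (R : realType) (Sigma : finType) (n : nat)
  (A : wautomaton R Sigma n) : Prop :=
  forall w : seq Sigma, wa_weight A w = 0 \/ wa_weight A w = 1.

Definition wa_lang (R : realType) (Sigma : finType) (n : nat)
  (A : wautomaton R Sigma n) : seq Sigma -> Prop :=
  fun w => wa_weight A w = 1.

Record dfa (Sigma : finType) := DFA {
  dfa_state : finType;
  dfa_start : dfa_state;
  dfa_delta : dfa_state -> Sigma -> dfa_state;
  dfa_final : {set dfa_state} }.

Definition dfa_run (Sigma : finType) (B : dfa Sigma) (q : dfa_state B)
  (w : seq Sigma) : dfa_state B := foldl (dfa_delta (d:=B)) q w.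

Definition dfa_lang (Sigma : finType) (B : dfa Sigma) : seq Sigma -> Prop :=
  fun w => dfa_run (dfa_start B) w \in dfa_final B.

Definition regular (Sigma : finType) (L : seq Sigma -> Prop) : Prop :=
  exists B : dfa Sigma, forall w, L w <-> dfa_lang B w.

(* Main.v *)
Require Import Defs.
From mathcomp Require Import all_boot all_order all_algebra reals.
From Stdlib Require Import Classical.
Set Implicit Arguments. Unset Strict Implicit. Unset Printing Implicit Defensive.
Import Order.TTheory GRing.Theory Num.Theory.
Local Open Scope ring_scope.

Section Aux.
Variables (R : realType) (Sigma : finType) (n : nat) (A : wautomaton R Sigma n).

Local Notation Mw := (wa_Mword A).
Local Notation L := (wa_weight A).

Lemma Mw_cat w u : Mw (w ++ u) = Mw w *m Mw u.
Proof.
elim: w => [|a w IH] /=; first by rewrite /wa_Mword /= mul1mx.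
by rewrite /wa_Mword /= -/(wa_Mword A (w ++ u)) IH -/(wa_Mword A w) mulmxA.
Qed.

Definition rv (u : seq Sigma) : 'rV[R]_n := (Mw u *m wa_eta A)^T.

Lemma L_cat w u : L (w ++ u) = \sum_l (wa_alpha A *m Mw w) ord0 l * rv u ord0 l.
Proof.
rewrite /wa_weight Mw_cat mulmxA -(mulmxA _ (Mw u)) mxE.
by apply: eq_bigr => l _; rewrite /rv; congr (_ * _); rewrite [RHS]mxE.
Qed.

Definition Xm k (f : 'I_k -> seq Sigma) : 'M[R]_(k, n) :=
  \matrix_(i, j) rv (f i) ord0 j.

Lemma row_Xm k (f : 'I_k -> seq Sigma) i : row i (Xm f) = rv (f i).
Proof. by apply/rowP => j; rewrite !mxE. Qed.

Lemma L_comb k (f : 'I_k -> seq Sigma) w u : (rv u <= Xm f)%MS ->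
  L (w ++ u) = \sum_j L (w ++ f j) * (rv u *m pinvmx (Xm f)) ord0 j.
Proof.
move=> H; rewrite L_cat -{1}(mulmxKpV H).
set c := rv u *m pinvmx (Xm f).
under eq_bigr => l _ do rewrite [(c *m _) _ _]mxE big_distrr /=.
rewrite exchange_big /=; apply: eq_bigr => j _.
rewrite L_cat big_distrl /=; apply: eq_bigr => l _.
by rewrite [Xm f _ _]mxE mulrCA mulrC.
Qed.

Lemma extend m : forall k (f : 'I_k -> seq Sigma), (n - k <= m)%N ->
  \rank (Xm f) = k ->
  exists k' (g : 'I_k' -> seq Sigma), (k' <= n)%N /\ forall u, (rv u <= Xm g)%MS.
Proof.
elim: m => [|m IH] k f Hm Hr.
  exists k, f; split; first by rewrite -Hr rank_leq_col.
  move=> u; apply/negPn/negP => Hu.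
  have Hk : (k <= n)%N by rewrite -Hr rank_leq_col.
  have Hlt : (Xm f < Xm f + rv u)%MS.
    by rewrite ltmxE addsmxSl /= addsmx_sub submx_refl /=.
  have := rank_ltmx Hlt.
  have := rank_leq_col (Xm f + rv u)%MS.
  rewrite Hr; have Hkn : k = n by apply/eqP; rewrite eqn_leq Hk -subn_eq0 -leqn0.
  by move=> a b; have := leq_trans b a; rewrite {1}Hkn ltnn.
have [Hall|Hn] := classic (forall u, (rv u <= Xm f)%MS).
  exists k, f; split => //; by rewrite -Hr rank_leq_col.
have [u Hu] := not_all_ex_not _ _ Hn.
pose f' (i : 'I_k.+1) := if unlift ord0 i is Some j then f j else u.
have Hsub : (Xm f + rv u <= Xm f')%MS.
  rewrite addsmx_sub; apply/andP; split.
    apply/row_subP => i; rewrite row_Xm.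
    have -> : f i = f' (lift ord0 i) by rewrite /f' liftK.
    by rewrite -row_Xm row_sub.
  have -> : u = f' ord0 by rewrite /f' unlift_none.
  by rewrite -row_Xm row_sub.
have Hlt : (Xm f < Xm f + rv u)%MS.
  by rewrite ltmxE addsmxSl /= addsmx_sub submx_refl /=; apply/negP.
have H1 := rank_ltmx Hlt.
have H2 := mxrankS Hsub.
have H3 := rank_leq_row (Xm f').
have Hr' : \rank (Xm f') = k.+1.
  apply/eqP; rewrite eqn_leq H3 /=; rewrite -[in X in (X < _)%N]Hr; exact: leq_trans H1 H2.
apply: (IH _ f' _ Hr').
by rewrite subnS; move: Hm; case: (n - k)%N.
Qed.

End Aux.

Theorem theorem1 (R : realType) (Sigma : finType) (n : nat)
  (A : wautomaton R Sigma n) :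
  is_IFA A ->
  regular (wa_lang A) /\
  exists B : dfa Sigma,
    (#|dfa_state B| <= 2 ^ n)%N /\ (forall w, dfa_lang B w <-> wa_lang A w).
Proof.
move=> Hifa.
have H0 : \rank (Xm A (fun i : 'I_0 => [::])) = 0%N.
  by apply/eqP; rewrite -leqn0 rank_leq_row.
have [k [g [Hk Hsp]]] := extend (leq_subr 0 n) H0.
pose C u := rv A u *m pinvmx (Xm A g).
pose delta (s : {ffun 'I_k -> bool}) (a : Sigma) : {ffun 'I_k -> bool} :=
  [ffun i => \sum_j ((s j)%:R : R) * C (a :: g i) ord0 j == 1].
pose B := @DFA Sigma {ffun 'I_k -> bool} [ffun j => wa_weight A ([::] ++ g j) == 1] delta
  [set s : {ffun 'I_k -> bool} | \sum_j ((s j)%:R : R) * C [::] ord0 j == 1].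
have H01 x : (((wa_weight A x == 1) : bool)%:R : R) = wa_weight A x.
  by case: (Hifa x) => ->; rewrite ?eqxx // eq_sym oner_eq0.
have Hinv w : dfa_run (dfa_start B) w = [ffun j => wa_weight A (w ++ g j) == 1].
  elim/last_ind: w => [//|w a IH].
  rewrite /dfa_run foldl_rcons -/(dfa_run _ w) IH /=.
  apply/ffunP => i; rewrite !ffunE.
  under eq_bigr => j _ do rewrite ffunE H01.
  by rewrite -L_comb // cat_rcons.
have HB w : dfa_lang B w <-> wa_lang A w.
  rewrite /dfa_lang Hinv inE /wa_lang.
  under eq_bigr => j _ do rewrite ffunE H01.
  by rewrite -L_comb // cats0; split => [/eqP|->].
split; first by exists B => w; rewrite HB.
exists B; split => //.
by rewrite /= card_ffun card_bool card_ord leq_exp2l.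
Qed.
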